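(* Let $\mathbb{D}^n\subseteq\mathbb{R}^n$ and $\mathbb{D}^m\subseteq\mathbb{R}^m$ be unbounded sets and let $f:\mathbb{D}^n\to\mathbb{D}^m$ be surjective. Let $g:\mathbb{D}^n\to\mathbb{D}^m$ be any neural network, i.e. $g=\omega\circ h_k\circ\cdots\circ h_1\circ\iota$ with a linear input layer $\iota:\mathbb{D}^n\to\mathbb{D}^{p_1}$, finitely many hidden layers $h_1,\dots,h_k$ ($h_j:\mathbb{D}^{p_j}\to\mathbb{D}^{q_j}$, the co-domain of each $h_j$ equal to the domain of $h_{j+1}$), and a linear output layer $\omega:\mathbb{D}^{q_k}\to\mathbb{D}^m$, such that $g$ has an activation bottleneck located in some hidden layer $h_i$ (the image of $h_i$ is bounded) and all layers after $h_i$ (namely $h_{i+1},\dots,h_k$ and $\omega$) are Lipschitz continuous. Then the maximum approximation error satisfies $$\varepsilon^\star_{f,g}=\sup\{\varepsilon\in\mathbb{R}^+:\exists x\in\mathbb{D}^n:\ \|f(x)-g(x)\|\ge\varepsilon\}=\infty.$$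
   Context: For each natural number $d$, $\mathbb{D}^d$ denotes a subset of $\mathbb{R}^d$; $\|\cdot\|$ is the Euclidean norm on $\mathbb{R}^m$. A hidden layer is a function $h:\mathbb{D}^p\to\mathbb{D}^q$ for natural numbers $p,q$. A neural network has an activation bottleneck if at least one of its hidden layers has bounded image; the bottleneck is said to be located in that layer. The quantity $\varepsilon^\star_{f,g}$ is called the maximum approximation error of $g$ on $f$. *)

(* Defs.v *)
From HB Require Import structures.
From mathcomp Require Import all_boot all_order all_algebra.
From mathcomp Require Import classical_sets reals constructive_ereal ereal.
Set Implicit Arguments. Unset Strict Implicit. Unset Printing Implicit Defensive.
Import Order.TTheory GRing.Theory Num.Theory.
Local Open Scope classical_set_scope.
Local Open Scope ring_scope.

Section Defs.
Variable R : realType.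

Definition enorm (d : nat) (v : 'rV[R]_d) : R :=
  Num.sqrt (\sum_(i < d) (v ord0 i) ^+ 2).

Definition ebounded (d : nat) (A : set 'rV[R]_d) : Prop :=
  exists M : R, forall x, A x -> enorm x <= M.

Definition maps_into (p q : nat) (A : set 'rV[R]_p) (B : set 'rV[R]_q)
  (F : 'rV[R]_p -> 'rV[R]_q) : Prop := forall x, A x -> B (F x).

Definition surj_onto (p q : nat) (A : set 'rV[R]_p) (B : set 'rV[R]_q)
  (F : 'rV[R]_p -> 'rV[R]_q) : Prop := forall y, B y -> exists2 x, A x & F x = y.

Definition affine_layer (p q : nat) (F : 'rV[R]_p -> 'rV[R]_q) : Prop :=
  exists (W : 'M[R]_(p, q)) (b : 'rV[R]_q), forall x, F x = x *m W + b.

Definition lipschitz_on (p q : nat) (A : set 'rV[R]_p)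
  (F : 'rV[R]_p -> 'rV[R]_q) : Prop :=
  exists L : R, forall x y, A x -> A y -> enorm (F x - F y) <= L * enorm (x - y).

Fixpoint hidden_comp (d : nat -> nat) (h : forall j, 'rV[R]_(d j) -> 'rV[R]_(d j.+1))
  (j : nat) : 'rV[R]_(d 0%N) -> 'rV[R]_(d j) :=
  match j return 'rV[R]_(d 0%N) -> 'rV[R]_(d j) with
  | 0%N => fun x => x
  | j'.+1 => fun x => h j' (hidden_comp h j' x)
  end.

(* The network g = omega o h_{k-1} o ... o h_0 o iota. *)
Definition network (n m k : nat) (d : nat -> nat)
  (iota : 'rV[R]_n -> 'rV[R]_(d 0%N))
  (h : forall j, 'rV[R]_(d j) -> 'rV[R]_(d j.+1))
  (omega : 'rV[R]_(d k) -> 'rV[R]_m) : 'rV[R]_n -> 'rV[R]_m :=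
  fun x => omega (hidden_comp h k (iota x)).

Definition max_approx_error (n m : nat) (Dn : set 'rV[R]_n)
  (f g : 'rV[R]_n -> 'rV[R]_m) : \bar R :=
  ereal_sup [set (e%:E)%E | e in
     [set e : R | 0 < e /\ exists2 x, Dn x & e <= enorm (f x - g x)]].

End Defs.

(* Main.v *)
Require Import Defs.
From HB Require Import structures.
From mathcomp Require Import all_boot all_order all_algebra.
From mathcomp Require Import classical_sets reals constructive_ereal ereal.
From mathcomp Require Import boolp lra.
Import Order.TTheory GRing.Theory Num.Theory.
Local Open Scope classical_set_scope.
Local Open Scope ring_scope.

Set Implicit Arguments. Unset Strict Implicit.
Section Aux.
Variable R : realType.

Definition sq (p : nat) (v : 'rV[R]_p) : R := \sum_(i < p) (v ord0 i) ^+ 2.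

Lemma sq_ge0 p (v : 'rV[R]_p) : 0 <= sq v.
Proof. by apply: sumr_ge0 => i _; exact: sqr_ge0. Qed.

Lemma enorm_ge0 p (v : 'rV[R]_p) : 0 <= enorm v.
Proof. exact: sqrtr_ge0. Qed.

Lemma enorm_sq p (v : 'rV[R]_p) : enorm v ^+ 2 = sq v.
Proof. by rewrite /enorm sqr_sqrtr // sq_ge0. Qed.

Lemma sqD p (a b : 'rV[R]_p) : sq (a + b) <= 2 * sq a + 2 * sq b.
Proof.
rewrite /sq !mulr_sumr -big_split /=; apply: ler_sum => i _.
rewrite !mxE; set x := a ord0 i; set y := b ord0 i.
have := sqr_ge0 (x - y); rewrite !expr2; nra.
Qed.

Lemma sqN p (a : 'rV[R]_p) : sq (- a) = sq a.
Proof. by apply: eq_bigr => i _; rewrite mxE sqrrN. Qed.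

Lemma sqB p (a b : 'rV[R]_p) : sq (a - b) <= 2 * sq a + 2 * sq b.
Proof. by have := sqD a (- b); rewrite sqN. Qed.

Lemma lip_bound p q (Dp : set 'rV[R]_p) (F : 'rV[R]_p -> 'rV[R]_q)
  (T : Type) (P : T -> Prop) (a : T -> 'rV[R]_p) :
  lipschitz_on Dp F -> (forall t, P t -> Dp (a t)) ->
  (exists M, forall t, P t -> sq (a t) <= M) ->
  exists M, forall t, P t -> sq (F (a t)) <= M.
Proof.
move=> [L HL] HD [M HM].
case: (pselect (exists t0, P t0)) => [[t0 Pt0]|nP]; last first.
  by exists 0 => t Pt; exfalso; apply: nP; exists t.
set y0 := a t0.
exists (2 * (L ^+ 2 * (2 * M + 2 * sq y0)) + 2 * sq (F y0)) => t Pt.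
have H1 : sq (F (a t) - F y0) <= L ^+ 2 * sq (a t - y0).
  have := HL _ _ (HD _ Pt) (HD _ Pt0).
  rewrite -!enorm_sq.
  have := enorm_ge0 (F (a t) - F y0); have := enorm_ge0 (a t - y0).
  move: (enorm _) (enorm _) => u v hu hv huv; rewrite !expr2; nra.
have H2 : sq (a t - y0) <= 2 * M + 2 * sq y0.
  have := sqB (a t) y0; have := HM _ Pt; lra.
have H3 : L ^+ 2 * sq (a t - y0) <= L ^+ 2 * (2 * M + 2 * sq y0).
  by apply: ler_wpM2l => //; exact: sqr_ge0.
have := sqD (F (a t) - F y0) (F y0); rewrite subrK; lra.
Qed.

End Aux.

Theorem theorem4 (R : realType) (D : forall d : nat, set 'rV[R]_d) (n m : nat)
  (f : 'rV[R]_n -> 'rV[R]_m)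
  (k : nat) (d : nat -> nat)
  (iota : 'rV[R]_n -> 'rV[R]_(d 0%N))
  (h : forall j, 'rV[R]_(d j) -> 'rV[R]_(d j.+1))
  (omega : 'rV[R]_(d k) -> 'rV[R]_m)
  (i : nat) :
  ~ ebounded (D n) -> ~ ebounded (D m) ->
  maps_into (D n) (D m) f -> surj_onto (D n) (D m) f ->
  affine_layer iota -> maps_into (D n) (D (d 0%N)) iota ->
  (forall j, (j < k)%N -> maps_into (D (d j)) (D (d j.+1)) (h j)) ->
  affine_layer omega -> maps_into (D (d k)) (D m) omega ->
  (i < k)%N ->
  ebounded (h i @` D (d i)) ->
  (forall j, (i < j < k)%N -> lipschitz_on (D (d j)) (h j)) ->
  lipschitz_on (D (d k)) omega ->
  max_approx_error (D n) f (network iota h omega) = +oo%E.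
Proof.
move=> nbn nbm _ surf _ Hiota Hh _ _ ik [M0 HM0] Hlip Hom.
have mem : forall j, (j <= k)%N -> forall x, D n x -> D (d j) (hidden_comp h j (iota x)).
  elim=> [|j IH] jk x Dx /=; first exact: Hiota.
  apply: (Hh j jk); apply: IH => //; exact: ltnW.
have bnd : forall t, (i < t <= k)%N ->
    exists M, forall x, D n x -> sq (hidden_comp h t (iota x)) <= M.
  elim=> [|t IH] /andP [it tk] //.
  have [->|ti] := eqVneq t i.
    exists (M0 ^+ 2) => x Dx /=.
    have := HM0 (h i (hidden_comp h i (iota x))) (ex_intro2 _ _ _ (mem i (ltnW ik) x Dx) erefl).
    rewrite -enorm_sq; have := enorm_ge0 (h i (hidden_comp h i (iota x))).
    move: (enorm _) => u hu hM; rewrite !expr2; nra.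
  have it' : (i < t)%N by rewrite ltn_neqAle eq_sym ti -ltnS.
  have [M HM] := IH (introT andP (conj it' (ltnW tk))).
  have := @lip_bound R _ _ (D (d t)) (h t) _ (D n) (fun x => hidden_comp h t (iota x))
    (Hlip t (introT andP (conj it' tk))) (fun x Dx => mem t (ltnW tk) x Dx) (ex_intro _ M HM).
  by [].
have [C HC] := @lip_bound R _ _ (D (d k)) omega _ (D n) (fun x => hidden_comp h k (iota x))
    Hom (fun x Dx => mem k (leqnn k) x Dx) (bnd k (introT andP (conj ik (leqnn k)))).
rewrite /max_approx_error.
set S := [set _ | _ in _].
have big : forall e : R, exists2 r : R, S r%:E & e < r.
  move=> e; set e' := Num.max (e + 1) 1.
  have e'1 : 1 <= e' by rewrite le_max lexx orbT.
  have e'e : e + 1 <= e' by rewrite le_max lexx.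
  have hC : 0 <= C.
    have [x0 Dx0] : exists x0, D n x0.
      apply: contra_notP nbn => H; exists 0 => x Dx; exfalso; apply: H; by exists x.
    exact: le_trans (sq_ge0 _) (HC x0 Dx0).
  have [y [Dy Hy]] : exists y, D m y /\ 2 * (e' ^+ 2 + C) + 1 < enorm y.
    apply: contra_notP nbm => H; exists (2 * (e' ^+ 2 + C) + 1) => y Dy.
    rewrite leNgt; apply/negP => Hy; apply: H; by exists y.
  have [x Dx fxy] := surf y Dy.
  exists e'; last lra.
  exists e' => //; split; first lra.
  exists x => //.
  rewrite leNgt; apply/negP => Hlt.
  rewrite fxy in Hlt *.
  set gx := network iota h omega x in Hlt *.
  have h1 := sqD (y - gx) gx; rewrite subrK -!enorm_sq in h1.
  have h2 := HC x Dx; rewrite -enorm_sq in h2.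
  have h3 := enorm_ge0 (y - gx).
  have h4 := enorm_ge0 y.
  move: h1 h2 h3 h4 Hlt Hy; rewrite /gx /network.
  move: (enorm (y - _)) (enorm y) (enorm (omega _)) => a b c.
  rewrite !expr2 => h1 h2 h3 h4 Hlt Hy.
  have hb : b <= b * b by nra.
  have ha : a * a <= e' * e' by nra.
  nra.
case E: (ereal_sup S) => [r| |] //.
  have [r' Sr' rr'] := big r.
  have := ereal_sup_ubound Sr'; by rewrite E lee_fin leNgt rr'.
have [r'' Sr'' _] := big 0.
by have := ereal_sup_ubound Sr''; rewrite E.
Qed.
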